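(* Let $G=(V,E)$ be a planar biconnected graph with $\deg(v)\ge 3$ for every $v\in V$. Then the SPQR-tree of $G$ contains at least one Q-node that is adjacent to a P-node or an R-node.
   Context: The SPQR-tree (with Q-nodes) of a biconnected graph $G$ is the standard decomposition tree of $G$ into its triconnected components. Each node $\mu$ has a skeleton graph: for a Q-node it consists of two parallel edges, one of which is an edge of $G$; for an S-node it is a simple cycle of length at least three; for a P-node it is a bundle of at least three parallel edges between two vertices; for an R-node it is a simple triconnected graph. The leaves are exactly the Q-nodes, one for each edge of $G$; no two S-nodes and no two P-nodes are adjacent in the tree. *)

(* Defs.v *)
From HB Require Import structures.
From mathcomp Require Import all_boot.
From mathcomp Require Import fingroup perm.

Set Implicit Arguments.
Unset Strict Implicit.
Unset Printing Implicit Defensive.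

Definition simple_graph (T : finType) (e : rel T) :=
  symmetric e /\ irreflexive e.

Definition induced_connected (T : finType) (e : rel T) (A : {set T}) :=
  forall x y, x \in A -> y \in A ->
    connect [rel a b | [&& a \in A, b \in A & e a b]] x y.

Definition biconnected (T : finType) (e : rel T) :=
  induced_connected e [set: T] /\ forall v : T, induced_connected e [set~ v].

Definition degree (T : finType) (e : rel T) (x : T) := #|[set y | e x y]|.

Definition edges (T : finType) (e : rel T) : {set {set T}} :=
  [set f : {set T} | [exists x, exists y, e x y && (f == [set x; y])]].

Definition darts (T : finType) (e : rel T) : {set T * T} :=
  [set p | e p.1 p.2].

Definition rotation_system (T : finType) (e : rel T) (rot : {perm T * T}) :=
  [/\ forall p, p \in darts e -> rot p \in darts e /\ (rot p).1 = p.1,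
      forall p, p \notin darts e -> rot p = p &
      forall p q, p \in darts e -> q \in darts e -> p.1 = q.1 ->
        fconnect rot p q].

Definition face_map (T : finType) (rot : {perm T * T}) (p : T * T) : T * T :=
  rot (p.2, p.1).

Definition isolated (T : finType) (e : rel T) : {set T} :=
  [set x | [forall y, ~~ e x y]].

(* planar: some rotation system has Euler characteristic 2 on every
   connected component, i.e. V - E + F = 2 * (#components), where an
   isolated vertex counts as having one face. *)
Definition planar (T : finType) (e : rel T) :=
  exists rot : {perm T * T}, rotation_system e rot /\
    #|T| + n_comp (frel (face_map rot)) (mem (darts e)) + #|isolated e|
      = 2 * n_comp e (mem [set: T]) + #|edges e|.

Inductive spqr_kind := SK | PK | QK | RK.

Definition kind_nat k := match k with SK => 0 | PK => 1 | QK => 2 | RK => 3 end.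
Definition nat_kind n := match n with 0 => SK | 1 => PK | 2 => QK | _ => RK end.
Lemma kind_natK : cancel kind_nat nat_kind. Proof. by case. Qed.
HB.instance Definition _ := Equality.copy spqr_kind (can_type kind_natK).

(* A candidate SPQR-tree is given by
   - a finite type N of tree nodes with adjacency relation tadj,
   - the kind of each node,
   - for each tree edge {mu, nu} the two poles (vertices of G) of the pair of
     virtual edges (one in the skeleton of mu, one in that of nu),
   - for each Q-node its real edge of G.
   The skeleton of mu is the multigraph whose vertices are vertices of G and
   whose edges are: one virtual edge for every tree neighbour nu of mu (with
   endpoints poles mu nu), plus the real edge qedge mu if mu is a Q-node. *)
Section SPQR.
Variables (T : finType) (e : rel T).
Variables (N : finType) (tadj : rel N) (kind : N -> spqr_kind)
          (poles : N -> N -> {set T}) (qedge : N -> {set T}).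

Definition nbrs (mu : N) : {set N} := [set nu | tadj mu nu].

Definition skel_vertices (mu : N) : {set T} :=
  (\bigcup_(nu in nbrs mu) poles mu nu) :|:
  (if kind mu == QK then qedge mu else set0).

Definition skel_rel (mu : N) : rel T :=
  fun u v => (u != v) &&
    ((kind mu == QK) && (qedge mu == [set u; v]) ||
     [exists nu, tadj mu nu && (poles mu nu == [set u; v])]).

(* number of skeleton edges of mu incident to v (S-nodes have no real edge) *)
Definition skel_deg (mu : N) (v : T) := #|[set nu in nbrs mu | v \in poles mu nu]|.

(* skeleton of an S-node: a simple cycle of length >= 3 *)
Definition S_skeleton (mu : N) :=
  [/\ 3 <= #|nbrs mu|,
      forall v, v \in skel_vertices mu -> skel_deg mu v = 2 &
      induced_connected (skel_rel mu) (skel_vertices mu)].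

Definition P_skeleton (mu : N) :=
  3 <= #|nbrs mu| /\
  exists u v : T, u != v /\ forall nu, nu \in nbrs mu -> poles mu nu = [set u; v].

Definition Q_skeleton (mu : N) :=
  #|nbrs mu| = 1 /\ qedge mu \in edges e /\
  forall nu, nu \in nbrs mu -> poles mu nu = qedge mu.

(* skeleton of an R-node: a simple triconnected graph *)
Definition R_skeleton (mu : N) :=
  [/\ forall nu1 nu2, nu1 \in nbrs mu -> nu2 \in nbrs mu ->
        poles mu nu1 = poles mu nu2 -> nu1 = nu2,
      4 <= #|skel_vertices mu| &
      forall a b : T,
        induced_connected (skel_rel mu) (skel_vertices mu :\ a :\ b)].

Definition is_tree :=
  [/\ symmetric tadj, irreflexive tadj, 0 < #|N|,
      forall x y, connect tadj x y &
      #|[set p : N * N | tadj p.1 p.2]| = 2 * (#|N| - 1)].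

Definition is_spqr_tree :=
  [/\ is_tree,
      (forall mu nu, tadj mu nu ->
         poles mu nu = poles nu mu /\ #|poles mu nu| = 2),
      (forall mu, match kind mu with
                  | SK => S_skeleton mu
                  | PK => P_skeleton mu
                  | QK => Q_skeleton mu
                  | RK => R_skeleton mu
                  end),
      (forall mu, (kind mu == QK) = (#|nbrs mu| == 1)) &
      [/\ forall mu1 mu2, kind mu1 = QK -> kind mu2 = QK ->
            qedge mu1 = qedge mu2 -> mu1 = mu2,
          forall f, f \in edges e -> exists2 mu, kind mu = QK & qedge mu = f,
          (forall mu nu, tadj mu nu -> ~ (kind mu = SK /\ kind nu = SK)),
          (forall mu nu, tadj mu nu -> ~ (kind mu = PK /\ kind nu = PK)) &
          (* gluing the skeletons along the virtual edge pairs gives G: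
             adjacent skeletons share exactly the poles of their virtual
             edges, and the skeletons containing a given vertex of G form a
             subtree *)
          ((forall mu nu, tadj mu nu ->
                skel_vertices mu :&: skel_vertices nu = poles mu nu) /\
           (forall v : T,
                induced_connected tadj [set mu | v \in skel_vertices mu]))]].

End SPQR.

(* Main.v *)
Require Import Defs.
From HB Require Import structures.
From mathcomp Require Import all_boot.
From mathcomp Require Import fingroup perm.
From mathcomp Require Import zify.
Set Implicit Arguments.
Unset Strict Implicit.
Unset Printing Implicit Defensive.


Lemma closed_sub (N : finType) (tadj : rel N) (A B : {set N}) x0 :
  symmetric tadj -> induced_connected tadj A -> x0 \in A -> x0 \in B ->
  (forall b a, b \in B -> a \in A -> tadj b a -> a \in B) -> A \subset B.
Proof.
move=> sym con x0A x0B cl; apply/subsetP => y yA.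
have := con x0 y x0A yA.
have clo : closed [rel a b | [&& a \in A, b \in A & tadj a b]] (mem B).
  move=> a b /= /and3P [aA bA ab].
  apply/idP/idP => H; first exact: (cl a b).
  by apply: (cl b a) => //; rewrite sym.
move/(closed_connect clo) => E. exact: (etrans (esym E) x0B).
Qed.

Lemma deg_bound (T : finType) (e : rel T) (N : finType) (tadj : rel N)
  (kind : N -> spqr_kind) (poles : N -> N -> {set T}) (qedge : N -> {set T})
  (v : T) (B : {set N}) :
  simple_graph e ->
  (forall f, f \in edges e -> exists2 mu, kind mu = QK & qedge mu = f) ->
  (forall q, kind q = QK -> v \in skel_vertices tadj kind poles qedge q -> q \in B) ->
  degree e v <= #|[set q in B | kind q == QK]|.
Proof.
move=> [esym eirr] qsurj HB.
have edg y : e v y -> [set v; y] \in edges e.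
  move=> evy; rewrite inE; apply/existsP; exists v; apply/existsP; exists y.
  by rewrite evy eqxx.
case: (set_0Vmem [set y | e v y]) => [E|[y0]].
  by rewrite /degree E cards0.
rewrite inE => /edg /qsurj [mu0 _ _].
pose f y := odflt mu0 [pick q | (kind q == QK) && (qedge q == [set v; y])].
have fP y : e v y -> kind (f y) = QK /\ qedge (f y) = [set v; y].
  move=> /edg /qsurj [q kq qq]; rewrite /f.
  case: pickP => [q' /andP [/eqP -> /eqP ->] //|/(_ q)].
  by rewrite kq qq !eqxx.
rewrite /degree -(card_in_imset (f := f)).
  apply: subset_leq_card; apply/subsetP => q /imsetP [y]; rewrite inE => evy ->.
  have [kq qq] := fP y evy.
  rewrite inE kq eqxx andbT; apply: HB => //.
  by rewrite /skel_vertices kq /= qq inE set21 orbT.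
move=> y1 y2; rewrite !inE => e1 e2 Ef.
have [_ q1] := fP y1 e1; have [_ q2] := fP y2 e2.
have : y1 \in [set v; y2] by rewrite -q2 -Ef q1 set22.
rewrite !inE => /orP [/eqP E|/eqP //].
by move: (eirr v); rewrite -{2}E e1.
Qed.

Lemma sum_bool_card (N : finType) (P : pred N) (b : pred N) :
  \sum_(y | P y) (b y : nat) = #|[set y | P y && b y]|.
Proof.
rewrite -sum1_card; under [RHS]eq_bigl => i do rewrite inE.
rewrite big_mkcondr /=; apply: eq_bigr => y _.
by case: (b y).
Qed.

Lemma count_lemma (N : finType) (tadj : rel N) (isQ : pred N) :
  symmetric tadj ->
  #|[set p : N*N | tadj p.1 p.2]| = 2 * (#|N| - 1) ->
  (forall x, isQ x -> #|[set y | tadj x y]| = 1) ->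
  (forall x y, tadj x y -> isQ x -> ~~ isQ y) ->
  (exists x, ~~ isQ x) ->
  exists2 x, ~~ isQ x & #|[set y | tadj x y && ~~ isQ y]| <= 1.
Proof.
move=> sym card leaf noQQ [x0 nx0].
pose S := \sum_x \sum_y (tadj x y : nat).
have HS : S = 2 * (#|N| - 1).
  rewrite -card /S (pair_big predT predT (fun x y => (tadj x y : nat))) /=.
  rewrite -sum1_card [RHS]big_mkcond /=; apply: eq_bigr => p _.
  by rewrite inE; case: (tadj _ _).
pose k := \sum_(x | isQ x) 1.
pose m := \sum_(x | ~~ isQ x) 1.
have HN : #|N| = k + m by rewrite -sum1_card [LHS](bigID isQ).
have m1 : 1 <= m by rewrite /m (bigD1 x0).
pose c x := \sum_(y | ~~ isQ y) (tadj x y : nat).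
have HS2 : S = 2 * k + \sum_(x | ~~ isQ x) c x.
  rewrite /S (bigID isQ) /=.
  have -> : \sum_(x | isQ x) \sum_y (tadj x y : nat) = k.
    apply: eq_bigr => x qx; rewrite (sum_bool_card predT) -(leaf x qx).
    by apply: eq_card => y; rewrite !inE.
  have -> : \sum_(x | ~~ isQ x) \sum_y (tadj x y : nat) =
            \sum_(x | ~~ isQ x) \sum_(y | isQ y) (tadj x y : nat) +
            \sum_(x | ~~ isQ x) c x.
    by rewrite -big_split /=; apply: eq_bigr => x _; rewrite (bigID isQ).
  have -> : \sum_(x | ~~ isQ x) \sum_(y | isQ y) (tadj x y : nat) = k.
    rewrite exchange_big /=; apply: eq_bigr => y qy.
    rewrite -(leaf y qy) -(sum_bool_card predT) [RHS](bigID (fun x => ~~ isQ x)) /=.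
    rewrite [X in _ = _ + X]big1 ?addn0; last first.
      by move=> x; rewrite negbK => qx; case E: (tadj y x) => //; move: (noQQ _ _ E qy); rewrite qx.
    by apply: eq_bigr => x _; rewrite sym.
  by rewrite addnA addnn -mul2n.
case: (boolP [exists x, ~~ isQ x && (c x <= 1)]) => [/existsP [x /andP [nx cx]]|/existsPn H].
  exists x => //; move: cx; apply: leq_trans; apply: eq_leq.
  by rewrite /c sum_bool_card; apply: eq_card => y; rewrite !inE andbC.
have : \sum_(x | ~~ isQ x) 2 <= \sum_(x | ~~ isQ x) c x.
  apply: leq_sum => x nx; move: (H x); rewrite nx /=; case: (c x) => [|[|]] //.
have -> : \sum_(x | ~~ isQ x) 2 = 2 * m.
  by rewrite /m big_distrr /=; apply: eq_bigr => ? _; rewrite muln1.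
lia.
Qed.

Theorem mainTheorem2 (T : finType) (e : rel T)
  (N : finType) (tadj : rel N) (kind : N -> spqr_kind)
  (poles : N -> N -> {set T}) (qedge : N -> {set T}) :
  simple_graph e -> planar e -> biconnected e ->
  (forall v : T, 3 <= degree e v) ->
  is_spqr_tree e tadj kind poles qedge ->
  exists mu : N, kind mu = QK /\
    exists2 nu : N, tadj mu nu & (kind nu = PK \/ kind nu = RK).
Proof.
move=> sg _ bic deg3 [[tsym tirr tpos tconn tcard] pol skel leaf [qinj qsurj noSS noPP [glue sub]]].
have nbQ q : kind q = QK -> forall a b, tadj q a -> tadj q b -> a = b.
  move=> kq a b qa qb; have := leaf q; rewrite kq eqxx => /esym/eqP c1.
  have : #|nbrs tadj q| <= 1 by rewrite c1.
  by move/card_le1_eqP; apply; rewrite inE.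
have degC (v : T) (B : {set N}) x0 : x0 \in B ->
    v \in skel_vertices tadj kind poles qedge x0 ->
    (forall b a, b \in B -> v \in skel_vertices tadj kind poles qedge a ->
       tadj b a -> a \in B) ->
    #|[set q in B | kind q == QK]| <= 2 -> False.
  move=> x0B vx0 cl cB.
  pose A := [set mu | v \in skel_vertices tadj kind poles qedge mu].
  have AB : A \subset B.
    apply: (closed_sub tsym (sub v)) x0B _ => //; first by rewrite inE.
    by move=> b a bB; rewrite inE; apply: cl.
  have := deg_bound (tadj := tadj) (kind := kind) (poles := poles) (qedge := qedge) (B := B) sg qsurj.
  move=> /(_ v) H.
  have : degree e v <= #|[set q in B | kind q == QK]|.
    by apply: H => q _ vq; apply: (subsetP AB); rewrite inE.
  by move=> H1; have := leq_trans (deg3 v) (leq_trans H1 cB).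
case: (boolP [exists mu, exists nu, [&& tadj mu nu, kind mu == QK & kind nu == QK]])
  => [/existsP [mu /existsP [nu /and3P [mn /eqP kmu /eqP knu]]] | /existsPn noQQ'].
  have := skel mu; rewrite kmu => -[_ [qe _]].
  move: qe; rewrite inE => /existsP [x /existsP [y /andP [_ /eqP qmu]]].
  exfalso; apply: (degC x [set mu; nu] mu).
  - by rewrite set21.
  - by rewrite /skel_vertices kmu eqxx qmu inE set21 orbT.
  - move=> b a; rewrite !inE => /orP [/eqP ->|/eqP ->] _ ba.
      by rewrite (nbQ mu kmu a nu ba mn) eqxx orbT.
    by rewrite (nbQ nu knu a mu ba) ?eqxx // tsym.
  - apply: (@leq_trans #|[set mu; nu]|).
      by apply: subset_leq_card; apply/subsetP => q; rewrite inE => /andP [].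
    by rewrite cards2; case: (_ != _).
case: (boolP [exists mu, (kind mu == QK) && [exists nu, tadj mu nu && ((kind nu == PK) || (kind nu == RK))]])
  => [/existsP [mu /andP [/eqP kmu /existsP [nu /andP [mn /orP H]]]] | /existsPn noW].
  exists mu; split => //; exists nu => //; case: H => /eqP; auto.
exfalso.
have noW2 q nu : kind q = QK -> tadj q nu -> (kind nu == PK) || (kind nu == RK) -> False.
  move=> kq qn H; move: (noW q); rewrite kq eqxx /=; move/negP; apply.
  by apply/existsP; exists nu; rewrite qn H.
have noQQ2 x y : tadj x y -> kind x == QK -> kind y != QK.
  move=> xy kx; move/existsPn: (noQQ' x) => /(_ y); by rewrite xy kx.
have [x nx cx] : exists2 x, ~~ (kind x == QK) &
    #|[set y | tadj x y && ~~ (kind y == QK)]| <= 1.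
  apply: (count_lemma (isQ := fun x => kind x == QK) tsym tcard).
  - by move=> y /= qy; have := leaf y; rewrite qy => /esym/eqP.
  - by move=> a b ab qa; exact: (noQQ2 a b ab qa).
  - move/card_gt0P: tpos => [x0 _].
    case: (boolP (kind x0 == QK)) => [q0|]; last by exists x0.
    have := leaf x0; rewrite q0 => /esym/eqP c1.
    have : 0 < #|nbrs tadj x0| by rewrite c1.
    move/card_gt0P => [y]; rewrite inE => xy; exists y; exact: noQQ2 q0.
have nonQ_uniq a b : tadj x a -> tadj x b -> kind a != QK -> kind b != QK -> a = b.
  by move=> xa xb qa qb; move/card_le1_eqP: cx; apply; rewrite inE ?xa ?xb ?qa ?qb.
have noQnb : (forall nu, tadj x nu -> kind nu != QK) -> #|nbrs tadj x| <= 1.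
  move=> H; apply/card_le1_eqP => a b; rewrite !inE => xa xb; apply: nonQ_uniq; auto.
have inskel nu w : tadj x nu -> w \in poles x nu -> w \in skel_vertices tadj kind poles qedge x.
  move=> xn wp; rewrite /skel_vertices inE; apply/orP; left.
  by apply/bigcupP; exists nu => //; rewrite inE.
case Ekx: (kind x) nx => [| | //|] _.
-
  have := skel x; rewrite Ekx => -[c3 sdeg scon].
  have [v vs vQ] : exists2 v, v \in skel_vertices tadj kind poles qedge x &
      forall nu, tadj x nu -> v \in poles x nu -> kind nu = QK.
    case: (boolP [exists nu, tadj x nu && (kind nu != QK)])
      => [/existsP [nu0 /andP [xn0 qn0]] | /existsPn H].
      case: (boolP (skel_vertices tadj kind poles qedge x \subset poles x nu0))
        => [Hsub | /subsetPn [v vs vn]]; last first.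
        exists v => // nu xn vp; apply/eqP; apply/negPn/negP => qn.
        have E := nonQ_uniq _ _ xn xn0 qn qn0.
        by move: vp; rewrite E (negbTE vn).
      exfalso.
      have : #|poles x nu0| == 2 by rewrite (pol x nu0 xn0).2.
      move/cards2P => [a [b [ab pab]]].
      have allp nu : tadj x nu -> poles x nu = poles x nu0.
        move=> xn; apply/eqP; rewrite eqEcard (pol x nu xn).2 (pol x nu0 xn0).2 leqnn andbT.
        apply: subset_trans Hsub; apply/subsetP => w wp; exact: inskel wp.
      have aS : a \in skel_vertices tadj kind poles qedge x.
        by apply: (inskel nu0) => //; rewrite pab set21.
      have := sdeg a aS; rewrite /skel_deg.
      have -> : #|[set nu in nbrs tadj x | a \in poles x nu]| = #|nbrs tadj x|.
        apply: eq_card => nu; rewrite !inE; case xn: (tadj x nu) => //=.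
        by rewrite (allp _ xn) pab set21.
      by move=> E1; move: c3; rewrite E1.
    have : 0 < #|nbrs tadj x| by exact: leq_trans _ c3.
    move/card_gt0P => [nu1]; rewrite inE => xn1.
    have : 0 < #|poles x nu1| by rewrite (pol x nu1 xn1).2.
    move/card_gt0P => [v vp]; exists v; first exact: inskel vp.
    move=> nu xn _; move: (H nu); rewrite xn /= => /negPn /eqP //.
  apply: (degC v (x |: [set nu | tadj x nu && (v \in poles x nu)]) x).
  + by rewrite setU11.
  + exact: vs.
  + move=> b a /setU1P [-> va ba | ].
      have vp : v \in poles x a by rewrite -(glue x a ba) inE vs va.
      by rewrite !inE ba vp orbT.
    rewrite inE => /andP [xb vb] va ba; have kb := vQ b xb vb.
    by rewrite (nbQ b kb a x ba) ?setU11 // tsym.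
  + apply: (@leq_trans #|[set nu in nbrs tadj x | v \in poles x nu]|); last first.
      by have := sdeg v vs; rewrite /skel_deg => ->.
    apply: subset_leq_card; apply/subsetP => q; rewrite !inE => /andP [/orP [/eqP ->|//]].
    by rewrite Ekx.
-
  case: (boolP [exists nu, tadj x nu && (kind nu == QK)])
    => [/existsP [nu /andP [xn /eqP qn]] | /existsPn H].
    by apply: (noW2 nu x qn); [rewrite tsym | rewrite Ekx].
  have := skel x; rewrite Ekx => -[c3 _].
  have : #|nbrs tadj x| <= 1.
    by apply: noQnb => nu xn; move: (H nu); rewrite xn.
  by move=> H1; have := leq_trans c3 H1.
-
  case: (boolP [exists nu, tadj x nu && (kind nu == QK)])
    => [/existsP [nu /andP [xn /eqP qn]] | /existsPn H].
    by apply: (noW2 nu x qn); [rewrite tsym | rewrite Ekx].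
  have := skel x; rewrite Ekx => -[_ c4 _].
  have c1 : #|nbrs tadj x| <= 1.
    by apply: noQnb => nu xn; move: (H nu); rewrite xn.
  case: (set_0Vmem (nbrs tadj x)) => [E | [nu0 n0]].
    have : skel_vertices tadj kind poles qedge x = set0.
      apply/setP => w; rewrite /skel_vertices Ekx /= !inE orbF.
      apply/negP => /bigcupP [nu]; by rewrite E inE.
    by move=> E2; move: c4; rewrite E2 cards0.
  have : skel_vertices tadj kind poles qedge x \subset poles x nu0.
    apply/subsetP => w; rewrite /skel_vertices Ekx /= inE in_set0 orbF.
    move=> /bigcupP [nu nun wp].
    by move/card_le1_eqP: c1 => /(_ nu nu0 nun n0) ->.
  move/subset_leq_card; move: n0; rewrite inE => n0; rewrite (pol x nu0 n0).2.
  by move=> H1; have := leq_trans c4 H1.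
Qed.
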